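(* The class of doubly ordered frames is not modally definable: there is no set of formulas of the bimodal language (with two modal operators interpreted by the two relations of a frame) whose class of validating frames $\langle X, R_1, R_2\rangle$ is exactly the class of doubly ordered frames.
   Context: A doubly ordered frame is a structure $\langle X, \leq_1, \leq_2\rangle$ where $\leq_1,\leq_2$ are quasiorders (reflexive and transitive binary relations) on $X$ such that $x \leq_1 y$ and $x \leq_2 y$ together imply $x = y$. Frames here are Kripke frames $\langle X, R_1, R_2\rangle$ with two binary relations; a class of such frames is modally definable if it is the class of all frames validating some set of formulas of the basic modal language with two modalities, the $i$-th interpreted via $R_i$. *)

(* Defs.v *)
Inductive formula : Type :=
  | Var  : nat -> formula
  | Bot  : formula
  | Imp  : formula -> formula -> formula
  | Box1 : formula -> formula
  | Box2 : formula -> formula.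

Definition Neg (p : formula) : formula := Imp p Bot.
Definition Top : formula := Neg Bot.
Definition Or  (p q : formula) : formula := Imp (Neg p) q.
Definition And (p q : formula) : formula := Neg (Imp p (Neg q)).
Definition Dia1 (p : formula) : formula := Neg (Box1 (Neg p)).
Definition Dia2 (p : formula) : formula := Neg (Box2 (Neg p)).

Fixpoint sat {X : Type} (R1 R2 : X -> X -> Prop) (V : nat -> X -> Prop)
    (x : X) (phi : formula) : Prop :=
  match phi with
  | Var n => V n x
  | Bot => False
  | Imp p q => sat R1 R2 V x p -> sat R1 R2 V x q
  | Box1 p => forall y, R1 x y -> sat R1 R2 V y p
  | Box2 p => forall y, R2 x y -> sat R1 R2 V y p
  end.

Definition valid_frame {X : Type} (R1 R2 : X -> X -> Prop) (phi : formula) : Prop :=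
  forall (V : nat -> X -> Prop) (x : X), sat R1 R2 V x phi.

Definition quasiorder {X : Type} (R : X -> X -> Prop) : Prop :=
  (forall x, R x x) /\ (forall x y z, R x y -> R y z -> R x z).

Definition doubly_ordered {X : Type} (R1 R2 : X -> X -> Prop) : Prop :=
  quasiorder R1 /\ quasiorder R2 /\
  (forall x y, R1 x y -> R2 x y -> x = y).

(* Main.v *)
Require Import Defs.

Inductive W3 : Type := A | B | B'.

Definition R1F (x y : W3) : Prop := x = y \/ (x = A /\ y = B).
Definition R2F (x y : W3) : Prop := x = y \/ (x = A /\ y = B').
Definition RG (x y : bool) : Prop := x = y \/ (x = false /\ y = true).
Definition f (w : W3) : bool := match w with A => false | _ => true end.

Lemma forth1 x y : R1F x y -> RG (f x) (f y).
Proof. unfold R1F, RG; intros [->|[-> ->]]; simpl; auto. Qed.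
Lemma forth2 x y : R2F x y -> RG (f x) (f y).
Proof. unfold R2F, RG; intros [->|[-> ->]]; simpl; auto. Qed.
Lemma back1 x v : RG (f x) v -> exists y, R1F x y /\ f y = v.
Proof.
  unfold RG, R1F; destruct x; simpl; intros [<-|[H ->]]; try discriminate.
  - exists A; auto. - exists B; auto. - exists B; auto. - exists B'; auto.
Qed.
Lemma back2 x v : RG (f x) v -> exists y, R2F x y /\ f y = v.
Proof.
  unfold RG, R2F; destruct x; simpl; intros [<-|[H ->]]; try discriminate.
  - exists A; auto. - exists B'; auto. - exists B; auto. - exists B'; auto.
Qed.

Lemma transfer (V : nat -> bool -> Prop) phi : forall x,
  sat R1F R2F (fun n w => V n (f w)) x phi <-> sat RG RG V (f x) phi.
Proof.
  induction phi; intro x; simpl.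
  - tauto.
  - tauto.
  - pose proof (IHphi1 x); pose proof (IHphi2 x); tauto.
  - split.
    + intros H v Hv. destruct (back1 x v Hv) as [y [Hy <-]]. apply IHphi, H, Hy.
    + intros H y Hy. apply IHphi, H, forth1, Hy.
  - split.
    + intros H v Hv. destruct (back2 x v Hv) as [y [Hy <-]]. apply IHphi, H, Hy.
    + intros H y Hy. apply IHphi, H, forth2, Hy.
Qed.

Lemma F_do : doubly_ordered R1F R2F.
Proof.
  unfold doubly_ordered, quasiorder, R1F, R2F.
  split; [|split].
  - split; [auto|]. intros x y z [->|[-> ->]] [->|[H ->]]; auto; discriminate.
  - split; [auto|]. intros x y z [->|[-> ->]] [->|[H ->]]; auto; discriminate.
  - intros x y [->|[-> ->]] [H|[_ H]]; auto; discriminate.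
Qed.

Theorem mainTheorem2 :
  ~ exists Gamma : formula -> Prop,
      forall (X : Type) (R1 R2 : X -> X -> Prop),
        (forall phi, Gamma phi -> valid_frame R1 R2 phi) <-> doubly_ordered R1 R2.
Proof.
  intros [Gamma HG].
  assert (Hval : forall phi, Gamma phi -> valid_frame RG RG phi).
  { intros phi Hphi V x.
    pose proof (proj2 (HG W3 R1F R2F) F_do phi Hphi) as Hv.
    assert (Hx : exists w, f w = x) by (destruct x; [exists B|exists A]; reflexivity).
    destruct Hx as [w <-]. apply transfer, Hv. }
  apply (HG bool RG RG) in Hval.
  destruct Hval as [_ [_ H]].
  assert (false = true) by (apply H; unfold RG; auto).
  discriminate.
Qed.
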